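(* Let $\mathbb{D}^n$ be the unit polydisk in $\mathbb{C}^n$, let $\mu:\mathbb{D}^n\to(0,\infty)$ be a weight, let $\psi\in H(\mathbb{D}^n)$ and let $\varphi=(\varphi_1,\dots,\varphi_n)$ be a holomorphic self-map of $\mathbb{D}^n$. Let $W_{\psi,\varphi}f=\psi\,(f\circ\varphi)$. The following are equivalent: (a) $W_{\psi,\varphi}:\mathcal{B}(\mathbb{D}^n)\to H^\infty_\mu(\mathbb{D}^n)$ is bounded; (b) $W_{\psi,\varphi}:\mathcal{B}_{0*}(\mathbb{D}^n)\to H^\infty_\mu(\mathbb{D}^n)$ is bounded; (c) $\psi\in H^\infty_\mu(\mathbb{D}^n)$ and $$\vartheta_\mu(\psi,\varphi)=\sup_{z\in\mathbb{D}^n}\tfrac12\mu(z)|\psi(z)|\sum_{j=1}^n\log\frac{1+|\varphi_j(z)|}{1-|\varphi_j(z)|}$$ is finite.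
   Context: $H(\mathbb{D}^n)$ denotes holomorphic functions $\mathbb{D}^n\to\mathbb{C}$. A weight is a continuous strictly positive function $\mu$; $H^\infty_\mu(\mathbb{D}^n)=\{f\in H(\mathbb{D}^n):\|f\|_{H^\infty_\mu}=\sup_{z}\mu(z)|f(z)|<\infty\}$. The Bergman metric of $\mathbb{D}^n$ is $H_z(u,\bar v)=\sum_{j=1}^n\frac{u_j\bar v_j}{(1-|z_j|^2)^2}$. For $f\in H(\mathbb{D}^n)$, $Q_f(z)=\sup_{u\ne 0}\frac{|\sum_k \partial_k f(z)u_k|}{H_z(u,\bar u)^{1/2}}$, $\beta_f=\sup_z Q_f(z)$, $\mathcal{B}(\mathbb{D}^n)=\{f:\beta_f<\infty\}$ with norm $\|f\|_{\mathcal{B}}=|f(0)|+\beta_f$, and $\mathcal{B}_{0*}(\mathbb{D}^n)=\{f\in\mathcal{B}(\mathbb{D}^n):\lim_{z\to\partial^*\mathbb{D}^n}Q_f(z)=0\}$ with the same norm, where $\partial^*\mathbb{D}^n$ is the distinguished boundary (the torus $\{|z_1|=\dots=|z_n|=1\}$). *)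

(* Defs.v *)
From HB Require Import structures.
From mathcomp Require Import all_boot all_order all_algebra.
From mathcomp Require Import all_classical all_reals all_analysis.
From mathcomp Require Import complex.
Import Order.TTheory GRing.Theory Num.Theory.
Import numFieldNormedType.Exports.

Set Implicit Arguments.
Unset Strict Implicit.
Unset Printing Implicit Defensive.

Local Open Scope ring_scope.
Local Open Scope classical_set_scope.

(* The complex field, seen as a numClosedFieldType so that MathComp-Analysis'
   normed-module structure (over C itself) is found; 'differentiable' over
   this field is complex (Frechet) differentiability. *)
Definition CC (R : rcfType) : numClosedFieldType := R[i].

Section Defs.
Variables (R : realType) (n : nat).

Local Notation C := (CC R).
Local Notation Cn := 'rV[C]_n.

Definition cabs (x : C) : R := Normc.normc (x : R[i]).

Definition polydisk : set Cn := [set z | forall j : 'I_n, cabs (z 0 j) < 1].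

Definition holo (f : Cn -> C) : Prop :=
  forall z, polydisk z -> differentiable f z.

Definition holo_selfmap (phi : Cn -> Cn) : Prop :=
  (forall j : 'I_n, holo (fun z => phi z 0 j)) /\
  (forall z, polydisk z -> polydisk (phi z)).

Definition is_weight (mu : Cn -> R) : Prop :=
  {within polydisk, continuous mu} /\ (forall z, polydisk z -> 0 < mu z).

Definition partial (f : Cn -> C) (k : 'I_n) (z : Cn) : C := 'D_('e_k) f z.

Definition bergmanH (z u : Cn) : R :=
  \sum_(j < n) cabs (u 0 j) ^+ 2 / (1 - cabs (z 0 j) ^+ 2) ^+ 2.

Definition Qf (f : Cn -> C) (z : Cn) : R :=
  sup [set cabs (\sum_(k < n) partial f k z * u 0 k) / Num.sqrt (bergmanH z u)
      | u in [set u : Cn | u != 0]].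

Definition beta (f : Cn -> C) : R := sup [set Qf f z | z in polydisk].

Definition in_Bloch (f : Cn -> C) : Prop :=
  holo f /\ has_ubound [set Qf f z | z in polydisk].

Definition bloch_norm (f : Cn -> C) : R := cabs (f 0) + beta f.

(* B_{0*}(D^n): Q_f(z) -> 0 as z -> distinguished boundary (all |z_j| -> 1) *)
Definition in_Bloch0star (f : Cn -> C) : Prop :=
  in_Bloch f /\
  forall eps : R, 0 < eps -> exists delta : R, 0 < delta /\
    forall z, polydisk z -> (forall j : 'I_n, 1 - cabs (z 0 j) < delta) ->
      Qf f z < eps.

Definition in_Hinf (mu : Cn -> R) (g : Cn -> C) : Prop :=
  holo g /\ has_ubound [set mu z * cabs (g z) | z in polydisk].

Definition Hinf_norm (mu : Cn -> R) (g : Cn -> C) : R :=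
  sup [set mu z * cabs (g z) | z in polydisk].

Definition Wop (psi : Cn -> C) (phi : Cn -> Cn) (f : Cn -> C) : Cn -> C :=
  fun z => psi z * f (phi z).

Definition bounded_into_Hinf (X : (Cn -> C) -> Prop) (mu : Cn -> R)
    (T : (Cn -> C) -> (Cn -> C)) : Prop :=
  exists M : R, forall f, X f ->
    in_Hinf mu (T f) /\ Hinf_norm mu (T f) <= M * bloch_norm f.

Definition theta_set (mu : Cn -> R) (psi : Cn -> C) (phi : Cn -> Cn) : set R :=
  [set 2^-1 * mu z * cabs (psi z) *
       \sum_(j < n) ln ((1 + cabs (phi z 0 j)) / (1 - cabs (phi z 0 j)))
  | z in polydisk].

End Defs.

(* Main.v *)
Require Import Defs.
From HB Require Import structures.
From mathcomp Require Import all_boot all_order all_algebra.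
From mathcomp Require Import all_classical all_reals all_analysis.
From mathcomp Require Import complex.
Import Order.TTheory GRing.Theory Num.Theory.
Import numFieldNormedType.Exports.
Local Open Scope ring_scope.
Local Open Scope classical_set_scope.
Local Open Scope complex_scope.
Set Implicit Arguments.
Unset Strict Implicit.
From mathcomp Require Import ring lra.
Section T. Variable R : realType.
Local Notation C := (CC R).
Lemma cabsE (x : C) : `|x| = (cabs x)%:C. Proof. by []. Qed.
Lemma cabs_ge0 (x : C) : 0 <= cabs x.
Proof. by rewrite -lecR -cabsE normr_ge0. Qed.
Lemma cabsM (x y : C) : cabs (x * y) = cabs x * cabs y.
Proof. by apply: complexI; rewrite -cabsE normrM !cabsE rmorphM. Qed.
Lemma cabsD (x y : C) : cabs (x + y) <= cabs x + cabs y.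
Proof. by rewrite -lecR rmorphD -!cabsE ler_normD. Qed.
Lemma cabsN (x : C) : cabs (- x) = cabs x.
Proof. by apply: complexI; rewrite -!cabsE normrN. Qed.
Lemma cabsB (x y : C) : cabs (x - y) = cabs (y - x).
Proof. by rewrite -cabsN opprB. Qed.
Lemma cabs_real (a : R) : cabs (a%:C) = `|a|.
Proof. by rewrite /cabs /= expr0n /= addr0 sqrtr_sqr. Qed.
Lemma cabs0 : cabs (0 : C) = 0.
Proof. by rewrite (_ : 0 = (0:R)%:C) // cabs_real normr0. Qed.
Lemma cabs1 : cabs (1 : C) = 1.
Proof. by rewrite (_ : 1 = (1:R)%:C) // cabs_real normr1. Qed.
Lemma cabsX (x : C) k : cabs (x ^+ k) = cabs x ^+ k.
Proof. by elim: k => [|k IH]; rewrite ?expr0 ?cabs1 // !exprS cabsM IH. Qed.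
Lemma cabs_sum (I : finType) (F : I -> C) : cabs (\sum_i F i) <= \sum_i cabs (F i).
Proof.
elim/big_ind2: _ => //; first by rewrite cabs0.
by move=> a b c d h1 h2; apply: le_trans (cabsD _ _) _; apply: lerD.
Qed.
Lemma cabs_eq0 (x : C) : (cabs x == 0) = (x == 0).
Proof. by rewrite -(inj_eq (@complexI R)) -cabsE normr_eq0. Qed.
Lemma Re_le_cabs (x : C) : @complex.Re R x <= cabs x.
Proof.
case: x => a b; rewrite /cabs /=.
apply: le_trans (ler_norm a) _.
rewrite -sqrtr_sqr ler_sqrt ?lerDl ?sqr_ge0 //; by rewrite addr_ge0 ?sqr_ge0.
Qed.
Lemma conj_mul (x : C) : x * x^* = ((cabs x) ^+ 2)%:C.
Proof.
case: x => a b; rewrite /cabs /= sqr_sqrtr ?addr_ge0 ?sqr_ge0 //.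
apply/eqP; rewrite eq_complex /=; apply/andP; split; apply/eqP; ring.
Qed.
Lemma cabs_conj (x : C) : cabs (x^*) = cabs x.
Proof. by case: x => a b; rewrite /cabs /= sqrrN. Qed.
End T.
Section Real. Variable R : realType.
Lemma bern (s : R) N : 0 <= s <= 1 -> 1 - N%:R * (1 - s) <= s ^+ N.
Proof.
move=> /andP[s0 s1]; elim: N => [|N IH]; first by rewrite mul0r subr0 expr0.
rewrite exprS -natr1.
have h1 : 0 <= 1 - s by rewrite subr_ge0.
have hN : 0 <= s ^+ N by rewrite exprn_ge0.
have : s * (1 - N%:R * (1 - s)) <= s * s ^+ N by exact: (ler_wpM2l s0 IH).
have : 0 <= N%:R * (1 - s) * (1 - s) by do 2?apply: mulr_ge0; rewrite ?ler0n.
move: IH; set t : R := N%:R; set u := s ^+ N. nra.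
Qed.
Lemma harm_ln N : ln (N.+1%:R : R) <= \sum_(k < N) (k.+1%:R)^-1.
Proof.
elim: N => [|N IH]; first by rewrite big_ord0 ln1.
rewrite big_ord_recr /=.
have -> : (N.+2%:R : R) = N.+1%:R * (1 + (N.+1%:R)^-1).
  by rewrite mulrDr mulr1 mulfV ?pnatr_eq0 // -natr1.
rewrite lnM ?posrE ?ltr0n // ?addr_gt0 ?invr_gt0 ?ltr0n //.
apply: lerD => //; apply: le_ln1Dx.
by apply: lt_le_trans (_ : 0 <= _); rewrite ?ltrN10 ?invr_ge0 ?ler0n.
Qed.
End Real.
Section Real2. Variable R : realType.
Definition Ntest (r : R) : nat := Num.Def.trunc ((2 * (1 - r ^+ 2))^-1).
Lemma test_lower (r : R) : 0 <= r < 1 ->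
  2^-1 * ln ((1 + r) / (1 - r)) <=
  4 + \sum_(k < Ntest r) (r ^+ 2) ^+ k.+1 / k.+1%:R.
Proof.
move=> /andP[r0 r1]; rewrite /Ntest.
set s := r ^+ 2.
have s0 : 0 <= s by rewrite /s sqr_ge0.
have s1 : s < 1 by rewrite /s; nra.
set x := (2 * (1 - s))^-1.
have x0 : 0 < x by rewrite /x invr_gt0; lra.
have [hNx hxN] := andP (truncn_itv (ltW x0)).
set N := Num.Def.trunc x in hNx hxN *.
have h1s : 0 < 1 - s by lra.
have hx1 : x * (1 - s) = 2^-1 by rewrite /x invfM -mulrA mulVf ?mulr1 // lt0r_neq0.
have hsN : 2^-1 <= s ^+ N.
  apply: le_trans _ (@bern R s N _); last by rewrite s0 ltW.
  have : N%:R * (1 - s) <= x * (1 - s) by apply: ler_wpM2r => //; lra.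
  lra.
have hS : s ^+ N * \sum_(k < N) (k.+1%:R)^-1 <= \sum_(k < N) s ^+ k.+1 / k.+1%:R.
  rewrite mulr_sumr; apply: ler_sum => k _.
  apply: ler_wpM2r; first by rewrite invr_ge0 ler0n.
  apply: ler_wiXn2l => //; first exact: ltW.
have hH := harm_ln R N.
have hlnx : ln x <= ln (N.+1%:R : R).
  by rewrite ler_ln ?posrE ?ltr0n // ltW.
have hH0 : 0 <= \sum_(k < N) (k.+1%:R : R)^-1.
  by apply: sumr_ge0 => k _; rewrite invr_ge0 ler0n.
have hS2 : 2^-1 * ln x <= \sum_(k < N) s ^+ k.+1 / k.+1%:R.
  apply: le_trans hS; apply: le_trans (_ : 2^-1 * \sum_(k < N) (k.+1%:R)^-1 <= _).
    by apply: ler_wpM2l => //; lra.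
  by apply: ler_wpM2r.
have hq : (1 + r) / (1 - r) <= 8 * x.
  rewrite /x invfM mulrA -[X in _ <= X]mulrA.
  have h1r : 0 < 1 - r by lra.
  rewrite ler_pdivrMr //.
  have h1r' : 0 < 1 + r by lra.
  have -> : 8 * (2^-1 / (1 - s)) * (1 - r) = 4 / (1 + r).
    rewrite /s; field; rewrite lt0r_neq0 //; rewrite (_ : 1 - r^+2 = (1 - r) * (1 + r)); last ring.
    by rewrite /= mulf_neq0 // lt0r_neq0.
  rewrite ler_pdivlMr //; nra.
have hq0 : 0 < (1 + r) / (1 - r) by apply: divr_gt0; lra.
have hl : ln ((1 + r) / (1 - r)) <= ln 8 + ln x.
  have h8x : 0 < 8 * x by apply: mulr_gt0 => //; lra.
  have h80 : (0 : R) < 8 by lra.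
  rewrite -lnM ?posrE //.
  by rewrite ler_ln ?posrE.
have h8 : ln (8 : R) <= 7.
  by have := @le_ln1Dx R 7; rewrite (_ : 1 + 7 = 8 :> R); [apply; lra | ring].
lra.
Qed.
End Real2.
Section H. Variables (R : realType) (n : nat).
Local Notation C := (CC R).
Local Notation Cn := 'rV[C]_n.
Lemma phi_diff (phi : Cn -> Cn) z : holo_selfmap phi -> polydisk z ->
  differentiable phi z.
Proof.
move=> [hphi _] pz.
have -> : phi = \sum_(j < n) (fun w => phi w 0 j *: ('e_j : Cn)).
  apply/funext => w; rewrite [LHS]row_sum_delta.
  by rewrite fct_sumE.
apply: differentiable_sum => j; apply: differentiableZl; exact: hphi.
Qed.
Lemma W_holo (psi : Cn -> C) phi f : holo psi -> holo_selfmap phi -> holo f ->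
  holo (Wop psi phi f).
Proof.
move=> hpsi hphi hf z pz.
have -> : Wop psi phi f = psi * (f \o phi) by apply/funext.
apply: differentiableM; first exact: hpsi.
apply: differentiable_comp; first exact: phi_diff.
by apply: hf; apply: hphi.2.
Qed.
Lemma D_sum (f : Cn -> C) z (u : Cn) : differentiable f z ->
  'D_u f z = \sum_(k < n) partial f k z * u 0 k.
Proof.
move=> df; rewrite deriveE // {1}(row_sum_delta u) linear_sum.
apply: eq_bigr => k _; rewrite linearZ /= /partial deriveE //.
by rewrite mulrC.
Qed.
End H.
Section Q. Variables (R : realType) (n : nat).
Local Notation C := (CC R).
Local Notation Cn := 'rV[C]_n.

Definition Bq (f : Cn -> C) (z : Cn) : R :=
  \sum_(k < n) cabs (partial f k z) * (1 - cabs (z 0 k) ^+ 2).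

Lemma d_pos (z : Cn) k : polydisk z -> 0 < 1 - cabs (z 0 k) ^+ 2.
Proof.
move=> pz; have h := pz k; have h0 := cabs_ge0 (z 0 k).
rewrite subr_gt0; rewrite -(expr1n _ 2). 
by rewrite ltr_pXn2r // ?nnegrE // ?ler01.
Qed.

Lemma bergmanH_ge0 (z u : Cn) : polydisk z -> 0 <= bergmanH z u.
Proof.
move=> pz; apply: sumr_ge0 => k _; apply: divr_ge0; first by rewrite sqr_ge0.
by rewrite sqr_ge0.
Qed.

Lemma coord_le (z u : Cn) k : polydisk z ->
  cabs (u 0 k) <= (1 - cabs (z 0 k) ^+ 2) * Num.sqrt (bergmanH z u).
Proof.
move=> pz; have dk := d_pos k pz.
set d := 1 - _ in dk *.
have hterm : cabs (u 0 k) ^+ 2 / d ^+ 2 <= bergmanH z u.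
  rewrite /bergmanH (bigD1 k) //= lerDl; apply: sumr_ge0 => j _.
  by apply: divr_ge0; rewrite sqr_ge0.
have e1 : cabs (u 0 k) = Num.sqrt (cabs (u 0 k) ^+ 2) by rewrite sqrtr_sqr ger0_norm // cabs_ge0.
have e2 : d = Num.sqrt (d ^+ 2) by rewrite sqrtr_sqr ger0_norm // ltW.
rewrite {1}e1 {1}e2 -sqrtrM ?sqr_ge0 // ler_sqrt; last first.
  by apply: mulr_ge0; rewrite ?sqr_ge0 ?bergmanH_ge0.
by rewrite -ler_pdivrMl ?exprn_gt0 // mulrC.
Qed.

Lemma ratio_bound (f : Cn -> C) z (u : Cn) : polydisk z ->
  cabs (\sum_(k < n) partial f k z * u 0 k) <= Bq f z * Num.sqrt (bergmanH z u).
Proof.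
move=> pz; apply: le_trans; first exact: cabs_sum.
rewrite /Bq mulr_suml; apply: ler_sum => k _; rewrite cabsM -mulrA.
by apply: ler_wpM2l; [exact: cabs_ge0 | exact: coord_le].
Qed.

Lemma bergmanH_gt0 (z u : Cn) : polydisk z -> u != 0 -> 0 < bergmanH z u.
Proof.
move=> pz /eqP hu.
have /existsP [k hk] : [exists k, u 0 k != 0].
  case: (boolP [exists k, u 0 k != 0]) => // /existsPn hall; exfalso.
  apply: hu; apply/rowP => k; rewrite mxE.
  exact/eqP/negPn/hall.
rewrite /bergmanH (bigD1 k) //=; apply: ltr_pwDl.
  apply: divr_gt0; last by rewrite exprn_gt0 // d_pos.
  by rewrite exprn_gt0 // lt0r cabs_eq0 hk cabs_ge0.
apply: sumr_ge0 => j _; apply: divr_ge0; by rewrite sqr_ge0.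
Qed.

Definition ratio_set (f : Cn -> C) (z : Cn) : set R :=
  [set cabs (\sum_(k < n) partial f k z * u 0 k) / Num.sqrt (bergmanH z u)
      | u in [set u : Cn | u != 0]].

Lemma ratio_ub (f : Cn -> C) (z : Cn) : polydisk z -> ubound (ratio_set f z) (Bq f z).
Proof.
move=> pz r [u /= hu <-].
have hH := bergmanH_gt0 pz hu.
rewrite ler_pdivrMr ?sqrtr_gt0 //; exact: ratio_bound.
Qed.

Lemma Bq_ge0 (f : Cn -> C) (z : Cn) : polydisk z -> 0 <= Bq f z.
Proof.
move=> pz; apply: sumr_ge0 => k _; apply: mulr_ge0; first exact: cabs_ge0.
exact/ltW/d_pos.
Qed.

Lemma QfE (f : Cn -> C) (z : Cn) : Qf f z = sup (ratio_set f z). Proof. by []. Qed.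

Lemma Qf_ge0 (f : Cn -> C) (z : Cn) : polydisk z -> 0 <= Qf f z.
Proof.
move=> pz; rewrite QfE.
have [[r hr]|h0] := pselect (ratio_set f z !=set0).
  apply: le_trans (ub_le_sup _ hr).
    case: hr => u _ <-; apply: divr_ge0; [exact: cabs_ge0 | exact: sqrtr_ge0].
  by exists (Bq f z); exact: ratio_ub.
have -> : ratio_set f z = set0.
  by apply/seteqP; split => // r hr; apply: h0; exists r.
by rewrite sup0.
Qed.

Lemma Qf_le (f : Cn -> C) (z : Cn) b : polydisk z -> Bq f z <= b -> Qf f z <= b.
Proof.
move=> pz hb; rewrite QfE.
have [hne|h0] := pselect (ratio_set f z !=set0).
  by apply: ge_sup => // r hr; apply: le_trans hb; exact: ratio_ub.
have -> : ratio_set f z = set0.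
  by apply/seteqP; split => // r hr; apply: h0; exists r.
by rewrite sup0; apply: le_trans hb; exact: Bq_ge0.
Qed.

Lemma D_le_Qf (f : Cn -> C) (z : Cn) (u : Cn) : polydisk z ->
  cabs (\sum_(k < n) partial f k z * u 0 k) <= Qf f z * Num.sqrt (bergmanH z u).
Proof.
move=> pz; have [->|hu] := eqVneq u 0.
  rewrite big1 ?cabs0; last by move=> k _; rewrite mxE mulr0.
  by apply: mulr_ge0; [exact: Qf_ge0 | exact: sqrtr_ge0].
have hH := bergmanH_gt0 pz hu.
rewrite -ler_pdivrMr ?sqrtr_gt0 // QfE; apply: ub_le_sup.
  by exists (Bq f z); exact: ratio_ub.
by exists u.
Qed.
End Q.
Section RD. Variables (R : realType) (n : nat).
Local Notation C := (CC R).
Local Notation Cn := 'rV[C]_n.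

Lemma absRe_le (x : C) : `|complex.Re x| <= cabs x.
Proof.
have e : complex.Re (- x) = - complex.Re x by case: x.
have h1 := Re_le_cabs x; have h2 := Re_le_cabs (- x).
rewrite cabsN e in h2.
by rewrite ler_norml; apply/andP; split; lra.
Qed.

Lemma Re_realM (r : R) (z : C) : complex.Re (r%:C * z) = r * complex.Re z.
Proof. by case: z => a b /=; ring. Qed.

Lemma cont_ReM (om z0 : C) :
  (fun z : C => complex.Re (om * z)) @ z0 --> complex.Re (om * z0).
Proof.
apply/(@cvgrPdist_lt _ _ _ _ (nbhs_filter z0)) => e e0.
have hp : 0 < cabs om + 1 by have := cabs_ge0 om; lra.
have he' : (0 : C) < (e / (cabs om + 1))%:C by rewrite ltcR divr_gt0.
near=> z.
have hz : `|z0 - z| < (e / (cabs om + 1))%:C.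
  near: z; move: he'; apply: ((@cvgrPdist_lt _ _ _ _ (nbhs_filter z0) id z0).1).
  exact: cvg_id.
rewrite cabsE ltcR in hz.
rewrite -(@raddfB _ _ (@complex.Re R)) -mulrBr.
apply: le_lt_trans (absRe_le _) _; rewrite cabsM.
apply: le_lt_trans (_ : cabs om * (e / (cabs om + 1)) < e).
  by apply: ler_wpM2l; [exact: cabs_ge0 | exact: ltW].
rewrite mulrA ltr_pdivrMr // ; have := cabs_ge0 om; nra.
Unshelve. all: by end_near.
Qed.

End RD.
Section RD2. Variables (R : realType) (n : nat).
Local Notation C := (CC R).
Local Notation Cn := 'rV[C]_n.

Lemma iota_cont : (fun s : R => (s%:C : C)) @ (0 : R) --> ((0 : R)%:C : C).
Proof.
apply/(@cvgrPdist_lt _ _ _ _ (nbhs_filter (0:R))) => e e0.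
have [b0 he] : complex.Im e = 0 /\ 0 < complex.Re e.
  by move: e0; rewrite ltcE => /andP[/eqP -> ->].
have ee : e = (complex.Re e)%:C by move: b0; clear; case: e => a b /= ->.
rewrite ee.
near=> s.
have hs : `|0 - s| < complex.Re e.
  near: s; move: he; apply: ((@cvgrPdist_lt _ _ _ _ (nbhs_filter (0:R)) id 0).1).
  exact: cvg_id.
by rewrite -rmorphB cabsE cabs_real ltcR.
Unshelve. all: by end_near.
Qed.

Lemma iota_dnbhs : (fun s : R => (s%:C : C)) @ (0 : R)^' --> (0 : C)^'.
Proof.
move=> A hA.
have h := iota_cont hA.
change (nbhs (0:R) (fun s : R => s != 0 -> A s%:C)).
apply: (@filterS _ _ (nbhs_filter (0:R)) _ _ _ h) => s hs s0; apply: hs.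
by rewrite eq_complex /= negb_and s0.
Qed.
End RD2.
Lemma invC_real (R : realType) (s : R) : ((s%:C : CC R)^-1) = (s^-1)%:C.
Proof.
apply/eqP; rewrite eq_complex /= expr0n /= addr0 mul0r oppr0 eqxx andbT.
have [->|s0] := eqVneq s 0; first by rewrite mul0r invr0.
by rewrite expr2 invfM mulrA mulfV ?mul1r.
Qed.
Section RD3. Variables (R : realType) (n : nat).
Local Notation C := (CC R).
Local Notation Cn := 'rV[C]_n.

Lemma Re_alg (om X Y : C) (r : R) :
  r * (complex.Re (om * X) - complex.Re (om * Y)) =
  complex.Re (om * (r%:C * (X - Y))).
Proof. by case: om X Y => a b [c d] [e f] /=; ring. Qed.

Lemma deriv_re (F : Cn -> C) (w : Cn) (om : C) (t : R) :
  differentiable F ((t%:C : C) *: w) ->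
  is_derive t 1 (fun s : R => complex.Re (om * F ((s%:C : C) *: w)))
     (complex.Re (om * 'D_w F ((t%:C : C) *: w))).
Proof.
move=> dF; set a := (t%:C : C) *: w.
have hq : (fun k : C => k^-1 *: ((F \o shift a) (k *: w) - F a)) @ (0:C)^' --> 'D_w F a.
  exact: (diff_derivable dF).
set h := fun s : R => _.
have key : (fun s : R => s^-1 *: ((h \o shift t) (s *: 1) - h t)) =
   (fun z => complex.Re (om * z)) \o (fun k : C => k^-1 *: ((F \o shift a) (k *: w) - F a)) \o (fun s : R => s%:C).
  apply/funext => s /=; rewrite /h /a /= -[s%:A]/(s * 1) mulr1 rmorphD /= scalerDl.
  rewrite invC_real; exact: (Re_alg om _ _ s^-1).
have cv : (fun s : R => s^-1 *: ((h \o shift t) (s *: 1) - h t)) @ 0^' --> complex.Re (om * 'D_w F a).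
  have c1 := cvg_comp _ _ hq (@cont_ReM R om _).
  have c2 := cvg_comp _ _ (@iota_dnbhs R) c1.
  rewrite key; exact: c2.
apply: DeriveDef; first exact: cvgP cv.
exact: cvg_lim cv.
Qed.
End RD3.
Section G1. Variable R : realType.
Lemma der_lin (c t : R) : is_derive t 1 (fun x : R => 1 + c * x) c.
Proof.
have h := is_deriveD (is_derive_cst (1:R) t 1) (is_deriveZ c (is_derive_id t (1:R))).
apply: (is_derive_eq h).
by rewrite add0r /GRing.scale /= mulr1.
Qed.
Lemma der_ln1 (c t : R) : 0 < 1 + c * t ->
  is_derive t 1 (fun x : R => ln (1 + c * x)) (c / (1 + c * t)).
Proof.
move=> h; have := @is_derive1_comp R (@ln R) (fun x => 1 + c * x) t _ _ (is_derive1_ln h) (der_lin c t).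
by rewrite mulrC.
Qed.
End G1.
Section G2. Variable R : realType.
Lemma sqrt_sum_le (n : nat) (a : 'I_n -> R) : (forall j, 0 <= a j) ->
  Num.sqrt (\sum_j a j ^+ 2) <= \sum_j a j.
Proof.
move=> a0.
have [h1 h2] : 0 <= \sum_j a j /\ \sum_j a j ^+ 2 <= (\sum_j a j) ^+ 2.
  apply: (@big_ind2 _ _ (fun x y => 0 <= y /\ x <= y ^+ 2)).
  - by rewrite expr0n.
  - move=> x1 x2 y1 y2 [p1 q1] [p2 q2]; split; first exact: addr_ge0.
    nra.
  - by move=> i _; split.
by rewrite -[X in _ <= X]ger0_norm // -sqrtr_sqr ler_sqrt // sqr_ge0.
Qed.
End G2.
Section G3. Variables (R : realType) (n : nat).
Local Notation C := (CC R).
Local Notation Cn := 'rV[C]_n.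

Lemma realC_mul (a b : R) : ((a%:C : C) * (b%:C : C)) = (a * b)%:C.
Proof. by apply/eqP; rewrite eq_complex /= !mulr0 !mul0r subr0 addr0 !eqxx. Qed.

Lemma cabsV (x : C) : cabs (x^-1) = (cabs x)^-1.
Proof. by apply: (@complexI R); rewrite -cabsE normfV cabsE invC_real. Qed.

Lemma polydisk_scale (w : Cn) (x : R) : polydisk w -> 0 <= x <= 1 ->
  polydisk ((x%:C : C) *: w).
Proof.
move=> pw /andP[x0 x1] j; rewrite mxE cabsM cabs_real ger0_norm //.
apply: le_lt_trans (pw j); apply: ler_piMl => //; exact: cabs_ge0.
Qed.

Lemma cabs_scale (w : Cn) (x : R) j : 0 <= x ->
  cabs (((x%:C : C) *: w) 0 j) = x * cabs (w 0 j).
Proof. by move=> x0; rewrite mxE cabsM cabs_real ger0_norm. Qed.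

Lemma polydisk0 : polydisk (0 : Cn).
Proof. by move=> j; rewrite mxE cabs0 ltr01. Qed.

Lemma beta_ge (f : Cn -> C) z : has_ubound [set Qf f z | z in @polydisk R n] ->
  polydisk z -> Qf f z <= beta f.
Proof. by move=> hub pz; apply: ub_le_sup => //; exists z. Qed.

Lemma beta_ge0 (f : Cn -> C) : has_ubound [set Qf f z | z in @polydisk R n] ->
  0 <= beta f.
Proof.
move=> hub; apply: le_trans (beta_ge hub polydisk0); exact: Qf_ge0 polydisk0.
Qed.
End G3.
Section G4. Variables (R : realType) (n : nat).
Local Notation C := (CC R).
Local Notation Cn := 'rV[C]_n.

Lemma growth (f : Cn -> C) (w : Cn) : holo f ->
  has_ubound [set Qf f z | z in @polydisk R n] -> polydisk w ->
  cabs (f w - f 0) <=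
  beta f * \sum_(j < n) 2^-1 * ln ((1 + cabs (w 0 j)) / (1 - cabs (w 0 j))).
Proof.
move=> hf hub pw.
set b := beta f; have b0 : 0 <= b := beta_ge0 hub.
set r := fun j => cabs (w 0 j).
have r0 : forall j, 0 <= r j by move=> j; exact: cabs_ge0.
have r1 : forall j, r j < 1 by move=> j; exact: pw.
rewrite -/(r _).
set d := f w - f 0.
have [d0|dn0] := eqVneq d 0.
  rewrite d0 cabs0; apply: mulr_ge0 => //; apply: sumr_ge0 => j _.
  apply: mulr_ge0; first by rewrite invr_ge0 ler0n.
  have := r0 j; have := r1 j; rewrite /r => h1 h2.
  apply: ln_ge0; rewrite ler_pdivlMr ?mul1r; lra.
have cd0 : cabs d != 0 by rewrite cabs_eq0.
set om : C := d^* / (cabs d)%:C.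
have hom : complex.Re (om * d) = cabs d.
  have -> : om * d = (cabs d)%:C.
    rewrite /om mulrAC [d^* * d]mulrC conj_mul invC_real realC_mul.
    by congr (_%:C); rewrite expr2 -mulrA mulfV ?mulr1.
  by [].
have hom1 : forall X : C, complex.Re (om * X) <= cabs X.
  move=> X; apply: le_trans (Re_le_cabs _) _.
  rewrite cabsM /om cabsM cabsV cabs_conj cabs_real ger0_norm ?cabs_ge0 //.
  by rewrite mulfV // mul1r.
pose g := fun (j : 'I_n) (t : R) =>
  2^-1 * (ln (1 + r j * t) - ln (1 + (- r j) * t)).
pose dg := fun (j : 'I_n) (t : R) =>
  2^-1 * (r j / (1 + r j * t) - (- r j) / (1 + (- r j) * t)).
pose G := fun t : R => b * \sum_(j < n) g j t.
pose dG := fun t : R => b * \sum_(j < n) dg j t.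
pose h := fun t : R => complex.Re (om * f ((t%:C : C) *: w)).
pose k := fun t : R => h t - G t.
pose dk := fun t : R => complex.Re (om * 'D_w f ((t%:C : C) *: w)) - dG t.
have derG : forall x : R, 0 <= x <= 1 -> is_derive x 1 G (dG x).
  move=> x /andP[x0 x1].
  have hG : G = b \*: \sum_(j < n) g j.
    by apply/funext => t; rewrite /G /= fct_sumE.
  have hdG : dG x = b *: \sum_(j < n) dg j x by [].
  rewrite hG hdG; apply: is_deriveZ; apply: is_derive_sum => j.
  have p1 : 0 < 1 + r j * x.
    by have := r0 j; have := mulr_ge0 (r0 j) x0; lra.
  have p2 : 0 < 1 + (- r j) * x.
    have : r j * x <= r j by apply: ler_piMr => //; exact: r0.
    have := r1 j; lra.
  have := is_deriveZ (2^-1) (is_deriveB (der_ln1 p1) (der_ln1 p2)).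
  by [].
have derk : forall x : R, 0 <= x <= 1 -> is_derive x 1 k (dk x).
  move=> x hx; apply: is_deriveB; last exact: derG.
  apply: deriv_re; apply: hf; exact: polydisk_scale.
have cont : {within `[0, 1], continuous k}.
  apply: derivable_within_continuous => x; rewrite in_itv /= => hx.
  exact: (@ex_derive _ _ _ _ _ _ _ (derk x hx)).
have oo_cc : forall x : R, x \in `]0, 1[%R -> 0 <= x <= 1.
  by move=> x; rewrite in_itv /= => /andP[a1 a2]; rewrite !ltW.
have [c hc eqc] := MVT (@ltr01 R) (fun x hx => derk x (oo_cc x hx)) cont.
have hc' := oo_cc c hc.
have [c0 c1] := andP hc'.
have dkc : dk c <= 0.
  rewrite /dk subr_le0.
  apply: le_trans (hom1 _) _.
  set z := (c%:C : C) *: w.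
  have pz : polydisk z := polydisk_scale pw hc'.
  rewrite (D_sum _ (hf _ pz)).
  apply: le_trans (D_le_Qf f w pz) _.
  apply: le_trans (_ : b * Num.sqrt (bergmanH z w) <= _).
    by apply: ler_wpM2r; [exact: sqrtr_ge0 | exact: beta_ge hub pz].
  have -> : dG c = b * \sum_(j < n) r j / (1 - (c * r j) ^+ 2).
    rewrite /dG; congr (_ * _); apply: eq_bigr => j _; rewrite /dg.
    have := r0 j; have := r1 j => h1 h2.
    have q1 : c * r j <= r j by apply: ler_piMl.
    have e1 : 1 + r j * c != 0 by rewrite lt0r_neq0 //; have := mulr_ge0 h2 c0; lra.
    have e2 : 1 + - r j * c != 0 by rewrite lt0r_neq0 //; rewrite mulrC in q1; lra.
    have e3 : 1 - (c * r j) ^+ 2 != 0.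
      rewrite lt0r_neq0 // subr_gt0 -(expr1n _ 2) ltr_pXn2r // ?nnegrE ?mulr_ge0 //.
      exact: le_lt_trans q1 h1.
    by field; rewrite e1 e2 e3.
  apply: ler_wpM2l => //.
  have -> : bergmanH z w = \sum_(j < n) (r j / (1 - (c * r j) ^+ 2)) ^+ 2.
    by apply: eq_bigr => j _; rewrite cabs_scale // expr_div_n.
  apply: sqrt_sum_le => j; apply: divr_ge0; first exact: r0.
  have q1 : c * r j <= r j by apply: ler_piMl => //; exact: r0.
  have q0 : 0 <= c * r j by apply: mulr_ge0 => //; exact: r0.
  have q2 := r1 j.
  rewrite subr_ge0 -(expr1n _ 2) ler_pXn2r ?nnegrE //; lra.
have hk : k 1 - k 0 <= 0 by rewrite eqc subr0 mulr1 //.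
have e1w : ((1:R)%:C : C) *: w = w by rewrite (_ : ((1:R)%:C : C) = 1) // scale1r.
have e0w : ((0:R)%:C : C) *: w = 0 by rewrite (_ : ((0:R)%:C : C) = 0) // scale0r.
have G0 : G 0 = 0.
  by rewrite /G big1 ?mulr0 // => j _; rewrite /g !mulr0 subrr mulr0.
have G1 : G 1 = b * \sum_(j < n) 2^-1 * ln ((1 + r j) / (1 - r j)).
  rewrite /G; congr (_ * _); apply: eq_bigr => j _; rewrite /g !mulr1.
  have := r0 j; have := r1 j => h1 h2.
  by rewrite ln_div ?posrE //; lra.
have hh : h 1 - h 0 = cabs d.
  rewrite /h e1w e0w -hom /d mulrBr.
  by rewrite (@raddfB _ _ (@complex.Re R)).
move: hk; rewrite /k G0 G1 subr0 => hk.
have : h 1 - h 0 <= b * \sum_(j < n) 2^-1 * ln ((1 + r j) / (1 - r j)) by lra.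
by rewrite hh.
Qed.
End G4.
Section T1. Variables (R : realType).
Local Notation C := (CC R).

Definition Pt (c : C) (N : nat) (x : C) : C :=
  \sum_(k < N) (c * x) ^+ k.+1 / k.+1%:R.
Definition dPt (c : C) (N : nat) (x : C) : C :=
  \sum_(k < N) c * (c * x) ^+ k.

Lemma Pt_der (c : C) (N : nat) (x : C) : is_derive x 1 (Pt c N) (dPt c N x).
Proof.
have -> : Pt c N = \sum_(k < N) (fun y : C => (k.+1%:R)^-1 * (c * y) ^+ k.+1).
  by apply/funext => y; rewrite /Pt fct_sumE; apply: eq_bigr => k _; rewrite mulrC.
apply: is_derive_sum => k.
have hl : is_derive x (1 : C) (fun y : C => c * y) c.
  apply: (is_derive_eq (is_deriveZ c (is_derive_id x (1 : C)))).
  by rewrite /GRing.scale /= mulr1.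
have := is_deriveZ (k.+1%:R)^-1 (is_deriveX k.+1 hl).
rewrite exprfctE => h.
apply: (is_derive_eq h).
rewrite /GRing.scale /= mulrA mulrA mulVf ?pnatr_eq0 // mul1r mulrC //.
Qed.
End T1.
Section T2. Variables (R : realType) (n : nat).
Local Notation C := (CC R).
Local Notation Cn := 'rV[C]_n.

Definition Ft (cs : 'I_n -> C) (Ns : 'I_n -> nat) (z : Cn) : C :=
  \sum_(j < n) Pt (cs j) (Ns j) (z 0 j).

Lemma Ft_diff cs Ns (z : Cn) : differentiable (Ft cs Ns) z.
Proof.
have -> : Ft cs Ns = \sum_(j < n) (fun x : Cn => Pt (cs j) (Ns j) (x 0 j)).
  by apply/funext => x; rewrite /Ft fct_sumE.
apply: differentiable_sum => j.
have -> : (fun x : Cn => Pt (cs j) (Ns j) (x 0 j)) =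
   Pt (cs j) (Ns j) \o (fun x : Cn => x 0 j) by [].
apply: differentiable_comp; first exact: differentiable_coord.
apply/derivable1_diffP; exact: (@ex_derive _ _ _ _ _ _ _ (Pt_der _ _ _)).
Qed.

Lemma Ft_partial cs Ns m (z : Cn) :
  partial (Ft cs Ns) m z = dPt (cs m) (Ns m) (z 0 m).
Proof.
rewrite /partial /derive.
have -> : (fun h : C => h^-1 *: ((Ft cs Ns \o shift z) (h *: 'e_m) - Ft cs Ns z)) =
          (fun h : C => h^-1 *: ((Pt (cs m) (Ns m) \o shift (z 0 m)) (h *: 1)
                                  - Pt (cs m) (Ns m) (z 0 m))).
  apply/funext => h; congr (_ *: _); rewrite /Ft /=.
  rewrite (bigD1 m) //= [X in _ - X](bigD1 m) //=.
  have -> : \sum_(i < n | i != m) Pt (cs i) (Ns i) ((h *: 'e_m + z) 0 i) =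
            \sum_(i < n | i != m) Pt (cs i) (Ns i) (z 0 i).
    apply: eq_bigr => i him; rewrite !mxE.
    by rewrite (negbTE him) andbF mulr0 add0r.
  rewrite !mxE !eqxx /= mulr1 -[h%:A]/(h * 1) mulr1.
  by rewrite opprD addrACA subrr addr0.
exact: (@derive_val _ _ _ _ _ _ _ (Pt_der (cs m) (Ns m) (z 0 m))).
Qed.
End T2.
Section T3. Variables (R : realType).
Local Notation C := (CC R).

Lemma pow_mono (a b : R) k : 0 <= a -> a <= b -> a ^+ k <= b ^+ k.
Proof.
move=> a0 ab; elim: k => [|k IH]; first by rewrite !expr0.
rewrite !exprS; apply: ler_pM => //; exact: exprn_ge0.
Qed.

Lemma geom_le (x : R) N : 0 <= x -> x < 1 -> \sum_(k < N) x ^+ k <= (1 - x)^-1.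
Proof.
move=> x0 x1.
have e : (\sum_(k < N) x ^+ k) * (1 - x) = 1 - x ^+ N.
  elim: N => [|N IH]; first by rewrite big_ord0 mul0r expr0 subrr.
  by rewrite big_ord_recr /= mulrDl IH exprS; ring.
have h1 : 0 < 1 - x by rewrite subr_gt0.
rewrite -(ler_pM2r h1) e mulVf ?lt0r_neq0 //.
by rewrite gerBl exprn_ge0.
Qed.

Lemma dPt_le (c x : C) N : cabs c <= 1 -> cabs x < 1 ->
  cabs (dPt c N x) <= \sum_(k < N) cabs x ^+ k.
Proof.
move=> c1 x1; apply: le_trans; first exact: cabs_sum.
apply: ler_sum => k _; rewrite cabsM cabsX cabsM.
have c0 := cabs_ge0 c; have x0 := cabs_ge0 x.
apply: le_trans (_ : 1 * cabs x ^+ k <= _); last by rewrite mul1r.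
apply: ler_pM => //; first by rewrite exprn_ge0 // mulr_ge0.
apply: pow_mono; first by rewrite mulr_ge0.
by rewrite ler_piMl.
Qed.

Lemma dPt_bound1 (c x : C) N : cabs c <= 1 -> cabs x < 1 ->
  cabs (dPt c N x) * (1 - cabs x ^+ 2) <= 2.
Proof.
move=> c1 x1; have x0 := cabs_ge0 x.
have h1 : 0 < 1 - cabs x by rewrite subr_gt0.
apply: le_trans (_ : (1 - cabs x)^-1 * (1 - cabs x ^+ 2) <= 2).
  apply: ler_wpM2r; first by nra.
  exact: le_trans (dPt_le N c1 x1) (geom_le N x0 x1).
have -> : (1 - cabs x)^-1 * (1 - cabs x ^+ 2) = 1 + cabs x.
  by field; rewrite lt0r_neq0.
lra.
Qed.

Lemma dPt_bound2 (c x : C) N : cabs c <= 1 -> cabs x < 1 ->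
  cabs (dPt c N x) <= N%:R.
Proof.
move=> c1 x1; apply: le_trans (dPt_le N c1 x1) _.
have x0 := cabs_ge0 x.
apply: le_trans (_ : \sum_(k < N) (1 : R) <= _).
  by apply: ler_sum => k _; apply: exprn_ile1 => //; exact: ltW.
by rewrite sumr_const card_ord.
Qed.
End T3.
Section T4. Variables (R : realType).
Local Notation C := (CC R).

Lemma realC_add (a b : R) : ((a%:C : C) + (b%:C : C)) = (a + b)%:C.
Proof. by apply/eqP; rewrite eq_complex /= addr0 !eqxx. Qed.

Lemma realC_nat m : (m%:R : C) = (m%:R : R)%:C.
Proof.
elim: m => [|m IH]; first by [].
by rewrite -!natr1 IH realC_add.
Qed.

Lemma realC_exp (a : R) k : ((a%:C : C) ^+ k) = (a ^+ k)%:C.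
Proof.
elim: k => [|k IH]; first by rewrite !expr0.
by rewrite !exprS IH realC_mul.
Qed.

Lemma Pt_val (x : C) N :
  complex.Re (Pt (x^*) N x) = \sum_(k < N) (cabs x ^+ 2) ^+ k.+1 / k.+1%:R.
Proof.
rewrite /Pt (@raddf_sum _ _ (@complex.Re R)); apply: eq_bigr => k _.
rewrite [x^* * x]mulrC conj_mul realC_exp realC_nat invC_real realC_mul.
by [].
Qed.
End T4.
Section T5. Variables (R : realType) (n : nat).
Local Notation C := (CC R).
Local Notation Cn := 'rV[C]_n.

Lemma Ft_0 cs Ns : Ft cs Ns (0 : Cn) = 0.
Proof.
rewrite /Ft big1 // => j _; rewrite /Pt big1 // => k _.
by rewrite mxE mulr0 expr0n /= mul0r.
Qed.

Lemma Ft_B0 (cs : 'I_n -> C) Ns : (forall j, cabs (cs j) <= 1) ->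
  in_Bloch0star (Ft cs Ns) /\ bloch_norm (Ft cs Ns) <= 2 * n%:R.
Proof.
move=> hc.
have Bq1 : forall z : Cn, polydisk z -> Bq (Ft cs Ns) z <= 2 * n%:R.
  move=> z pz; rewrite /Bq.
  apply: le_trans (_ : \sum_(m < n) (2 : R) <= _); last first.
    by rewrite sumr_const card_ord mulr_natr.
  apply: ler_sum => m _; rewrite Ft_partial; exact: dPt_bound1.
have Qle : forall z : Cn, polydisk z -> Qf (Ft cs Ns) z <= 2 * n%:R.
  by move=> z pz; apply: Qf_le => //; exact: Bq1.
have hub : has_ubound [set Qf (Ft cs Ns) z | z in @polydisk R n].
  by exists (2 * n%:R) => r [z pz <-]; exact: Qle.
split; last first.
  rewrite /bloch_norm Ft_0 cabs0 add0r; apply: ge_sup.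
    by exists (Qf (Ft cs Ns) 0), 0 => //; exact: polydisk0.
  by move=> r [z pz <-]; exact: Qle.
split; first by split => // z _; exact: Ft_diff.
move=> eps eps0.
set S := \sum_(m < n) (Ns m)%:R : R.
have S0 : 0 <= S by apply: sumr_ge0 => m _; exact: ler0n.
exists (eps / (2 * S + 1)); split; first by apply: divr_gt0 => //; lra.
move=> z pz hz.
set de := eps / (2 * S + 1).
have de0 : 0 < de by apply: divr_gt0 => //; lra.
apply: le_lt_trans (_ : Qf (Ft cs Ns) z <= 2 * de * S) _.
  apply: Qf_le => //; rewrite /Bq /S mulr_sumr.
  apply: ler_sum => m _; rewrite Ft_partial.
  have x0 := cabs_ge0 (z 0 m); have x1 := pz m; have hzm := hz m; rewrite -/de in hzm.
  have hd := dPt_bound2 (Ns m) (hc m) x1.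
  have c0 := cabs_ge0 (dPt (cs m) (Ns m) (z 0 m)).
  have n0 : (0 : R) <= (Ns m)%:R := ler0n _ _.
  have sq := sqr_ge0 (1 - cabs (z 0 m)).
  have : 1 - cabs (z 0 m) ^+ 2 <= 2 * de by nra.
  move=> h2; rewrite [2 * de * _]mulrC.
  apply: ler_pM => //; exact/ltW/d_pos.
have -> : 2 * de * S = eps * (2 * S / (2 * S + 1)).
  by rewrite /de; field; rewrite lt0r_neq0 //; lra.
rewrite -[X in _ < X]mulr1 ltr_pM2l // ltr_pdivrMr; lra.
Qed.
End T5.
Section Main. Variables (R : realType) (n : nat).
Local Notation C := (CC R).
Local Notation Cn := 'rV[C]_n.

Lemma theta_rw (mu : Cn -> R) (psi : Cn -> C) (w : Cn) z :
  2^-1 * mu z * cabs (psi z) *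
    \sum_(j < n) ln ((1 + cabs (w 0 j)) / (1 - cabs (w 0 j))) =
  mu z * cabs (psi z) *
    \sum_(j < n) 2^-1 * ln ((1 + cabs (w 0 j)) / (1 - cabs (w 0 j))).
Proof. by rewrite -mulr_sumr; ring. Qed.

Lemma CtoA (mu : Cn -> R) psi phi : is_weight mu -> holo psi -> holo_selfmap phi ->
  in_Hinf mu psi -> has_ubound (theta_set mu psi phi) ->
  bounded_into_Hinf (@in_Bloch R n) mu (Wop psi phi).
Proof.
move=> [_ mu0] hpsi hphi [_ [P hP]] [T hT].
set P' := Num.max P 0; set T' := Num.max T 0.
have P'0 : 0 <= P' by rewrite le_max lexx orbT.
have T'0 : 0 <= T' by rewrite le_max lexx orbT.
exists (P' + T') => f [hf hub].
have b0 := beta_ge0 hub.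
have key : forall z, polydisk z ->
    mu z * cabs (Wop psi phi f z) <= (P' + T') * bloch_norm f.
  move=> z pz; set w := phi z; have pw : polydisk w := hphi.2 z pz.
  have gr := growth hf hub pw.
  have hPz : mu z * cabs (psi z) <= P'.
    apply: le_trans (_ : P <= P'); last by rewrite le_max lexx.
    by apply: hP; exists z.
  have hTz : mu z * cabs (psi z) *
      \sum_(j < n) 2^-1 * ln ((1 + cabs (w 0 j)) / (1 - cabs (w 0 j))) <= T'.
    apply: le_trans (_ : T <= T'); last by rewrite le_max lexx.
    by rewrite -theta_rw; apply: hT; exists z.
  set L := \sum_(j < n) _ in gr hTz.
  have A0 : 0 <= mu z * cabs (psi z) by apply: mulr_ge0; [exact: ltW (mu0 z pz)| exact: cabs_ge0].
  have hfw : cabs (f w) <= cabs (f 0) + cabs (f w - f 0).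
    have e : f w = f 0 + (f w - f 0) by rewrite addrC subrK.
    by rewrite {1}e; apply: cabsD.
  rewrite /Wop cabsM mulrA -/w /bloch_norm.
  have c0 := cabs_ge0 (f 0).
  have h1 : mu z * cabs (psi z) * cabs (f w) <=
            mu z * cabs (psi z) * cabs (f 0) + beta f * (mu z * cabs (psi z) * L).
    have := ler_wpM2l A0 (le_trans hfw (lerD (lexx (cabs (f 0))) gr)).
    by rewrite mulrDr mulrCA.
  apply: le_trans h1 _.
  have := ler_wpM2r c0 hPz; have := ler_wpM2l b0 hTz.
  nra.
split.
  split; first exact: W_holo.
  by exists ((P' + T') * bloch_norm f) => r [z pz <-]; exact: key.
apply: ge_sup.
  by exists (mu 0 * cabs (Wop psi phi f 0)), 0 => //; exact: polydisk0.
by move=> r [z pz <-]; exact: key.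
Qed.
End Main.
Section Main2. Variables (R : realType) (n : nat).
Local Notation C := (CC R).
Local Notation Cn := 'rV[C]_n.

Lemma one_B0 : in_Bloch0star (fun _ : Cn => (1 : C)).
Proof.
have Q0 : forall z : Cn, polydisk z -> Qf (fun _ : Cn => (1 : C)) z <= 0.
  move=> z pz; apply: Qf_le => //; rewrite /Bq big1 // => k _.
  have -> : partial (fun _ : Cn => (1 : C)) k z = 0 := derive_cst (1 : C) z 'e_k.
  by rewrite cabs0 mul0r.
split.
  split; first by move=> z _; exact: differentiable_cst.
  by exists 0 => r [z pz <-]; exact: Q0.
by move=> eps e0; exists 1; split => // z pz _; exact: le_lt_trans (Q0 z pz) e0.
Qed.

Lemma BtoC (mu : Cn -> R) psi phi : is_weight mu -> holo psi -> holo_selfmap phi ->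
  bounded_into_Hinf (@in_Bloch0star R n) mu (Wop psi phi) ->
  in_Hinf mu psi /\ has_ubound (theta_set mu psi phi).
Proof.
move=> [_ mu0] hpsi hphi [M hM].
have [hW1 _] := hM _ one_B0.
have epsi : Wop psi phi (fun _ => 1) = psi by apply/funext => z; rewrite /Wop mulr1.
rewrite epsi in hW1.
split => //.
have [_ [P hP]] := hW1.
set P' := Num.max P 0.
have P'0 : 0 <= P' by rewrite le_max lexx orbT.
exists (4 * n%:R * P' + `|M| * (2 * n%:R)) => r [z pz <-].
set w := phi z; have pw : polydisk w := hphi.2 z pz.
pose cs := fun j => (w 0 j)^*.
pose Ns := fun j => Ntest (cabs (w 0 j)).
have hcs : forall j, cabs (cs j) <= 1 by move=> j; rewrite /cs cabs_conj; exact: ltW (pw j).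
have [hB0 hbn] := Ft_B0 Ns hcs.
have [[_ hub] hnorm] := hM _ hB0.
have bn0 : 0 <= bloch_norm (Ft cs Ns).
  by apply: addr_ge0; [exact: cabs_ge0 | exact: beta_ge0 hB0.1.2].
have A0 : 0 <= mu z * cabs (psi z) by apply: mulr_ge0; [exact: ltW (mu0 z pz)| exact: cabs_ge0].
have hPz : mu z * cabs (psi z) <= P'.
  apply: le_trans (_ : P <= P'); last by rewrite le_max lexx.
  by apply: hP; exists z.
have h1 : mu z * cabs (psi z) * cabs (Ft cs Ns w) <= `|M| * (2 * n%:R).
  rewrite -mulrA -cabsM.
  apply: le_trans (_ : Hinf_norm mu (Wop psi phi (Ft cs Ns)) <= _).
    by rewrite /Hinf_norm; apply: (ub_le_sup hub); exists z.
  apply: le_trans hnorm _.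
  apply: le_trans (_ : `|M| * bloch_norm (Ft cs Ns) <= _).
    by apply: ler_wpM2r => //; exact: ler_norm.
  by apply: ler_wpM2l => //; exact: normr_ge0.
set S := fun j : 'I_n => \sum_(k < Ns j) (cabs (w 0 j) ^+ 2) ^+ k.+1 / k.+1%:R.
have hval : \sum_(j < n) S j <= cabs (Ft cs Ns w).
  apply: le_trans (Re_le_cabs _); rewrite /Ft (@raddf_sum _ _ (@complex.Re R)).
  by rewrite le_eqVlt; apply/orP; left; apply/eqP/eq_bigr => j _; rewrite /cs /= Pt_val.
have hlow : \sum_(j < n) 2^-1 * ln ((1 + cabs (w 0 j)) / (1 - cabs (w 0 j))) <=
            4 * n%:R + \sum_(j < n) S j.
  apply: le_trans (_ : \sum_(j < n) (4 + S j) <= _).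
    apply: ler_sum => j _; apply: test_lower.
    by rewrite cabs_ge0 /=; exact: pw.
  by rewrite big_split /= sumr_const card_ord mulr_natr.
rewrite theta_rw.
have := ler_wpM2l A0 hlow.
have := ler_wpM2l A0 hval.
have : 0 <= 4 * n%:R :> R by rewrite mulr_ge0 ?ler0n.
move=> h4; have := ler_wpM2r h4 hPz.
nra.
Qed.
End Main2.

Unset Implicit Arguments.
Set Strict Implicit.
Close Scope complex_scope.

Theorem theorem5p1 (R : realType) (n : nat) (mu : 'rV[CC R]_n -> R)
    (psi : 'rV[CC R]_n -> CC R) (phi : 'rV[CC R]_n -> 'rV[CC R]_n) :
  is_weight mu -> holo psi -> holo_selfmap phi ->
  (bounded_into_Hinf (@in_Bloch R n) mu (Wop psi phi) <->
   bounded_into_Hinf (@in_Bloch0star R n) mu (Wop psi phi)) /\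
  (bounded_into_Hinf (@in_Bloch R n) mu (Wop psi phi) <->
   (in_Hinf mu psi /\ has_ubound (theta_set mu psi phi))).
Proof.
move=> hmu hpsi hphi.
have AB : bounded_into_Hinf (@in_Bloch R n) mu (Wop psi phi) ->
          bounded_into_Hinf (@in_Bloch0star R n) mu (Wop psi phi).
  by move=> [M hM]; exists M => f [hB _]; exact: hM.
have CA : in_Hinf mu psi /\ has_ubound (theta_set mu psi phi) ->
          bounded_into_Hinf (@in_Bloch R n) mu (Wop psi phi).
  by move=> [h1 h2]; exact: CtoA.
have BC := BtoC hmu hpsi hphi.
split; split => //.
- by move=> hb; apply: CA; exact: BC.
- by move=> hb; apply: BC; exact: AB.
Qed.
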